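(* For every formula $\varphi$ of $\mathcal{L}(\Rightarrow)$, $\varphi$ is a theorem of the Yalcin logic if and only if $\varphi$ is a theorem of the logic defined in the same way as the Yalcin logic but with the axiom schemes A1–A4 in place of I1–I7, where A1: $(\varphi\Rightarrow\pi)\leftrightarrow\Box(\varphi\to\pi)$ for $\pi$ nonmodal; A2: $(\varphi\Rightarrow(\alpha\wedge\beta))\leftrightarrow((\varphi\Rightarrow\alpha)\wedge(\varphi\Rightarrow\beta))$; A3: $(\varphi\Rightarrow(\alpha\vee\Box\beta))\leftrightarrow((\varphi\Rightarrow\alpha)\vee(\varphi\Rightarrow\beta))$; A4: $(\varphi\Rightarrow(\alpha\vee\Diamond\beta))\leftrightarrow((\varphi\Rightarrow\alpha)\vee\neg(\varphi\Rightarrow\neg\beta))$.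
   Context: The language $\mathcal{L}(\Rightarrow)$ is given by $\varphi::= p\mid \neg\varphi\mid (\varphi\wedge\varphi)\mid \Box\varphi \mid (\varphi\Rightarrow\varphi)$, with $p$ ranging over a fixed set of propositional variables; $\vee,\to,\leftrightarrow,\bot$ as usual and $\Diamond\varphi:=\neg\Box\neg\varphi$. A formula is nonmodal if it contains neither $\Rightarrow$ nor $\Box$. The Yalcin logic is the smallest set of formulas of $\mathcal{L}(\Rightarrow)$ closed under replacement of equivalents (if $\alpha\leftrightarrow\beta$ is in the set and $\varphi'$ results from $\varphi$ by replacing an occurrence of $\alpha$ by $\beta$, then $\varphi\leftrightarrow\varphi'$ is in the set), modus ponens for $\to$, and necessitation for $\Box$, and containing all substitution instances of propositional tautologies and all instances of: K: $\Box(\varphi\to\psi)\to(\Box\varphi\to\Box\psi)$; 4: $\Diamond\Diamond\varphi\to\Diamond\varphi$; 5: $\Diamond\Box\varphi\to\Box\varphi$; I1: $(\varphi\Rightarrow\pi)\leftrightarrow\Box(\varphi\to\pi)$ for $\pi$ nonmodal; I2: $(\varphi\Rightarrow(\alpha\wedge\beta))\leftrightarrow((\varphi\Rightarrow\alpha)\wedge(\varphi\Rightarrow\beta))$; I3: $(\varphi\Rightarrow\alpha)\to(\varphi\Rightarrow(\alpha\vee\beta))$; I4: $(\varphi\Rightarrow\alpha)\to(\varphi\Rightarrow\Box\alpha)$; I5: $((\varphi\Rightarrow(\alpha\vee\Box\beta))\wedge\neg(\varphi\Rightarrow\beta))\to(\varphi\Rightarrow\alpha)$; I6: $((\varphi\Rightarrow(\alpha\vee\Diamond\beta))\wedge(\varphi\Rightarrow\neg\beta))\to(\varphi\Rightarrow\alpha)$;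 I7: $\neg(\varphi\Rightarrow\beta)\to(\varphi\Rightarrow\Diamond\neg\beta)$. The alternative logic has the same rules and the axioms tautologies, K, 4, 5, A1–A4. *)

(* Defs.v *)
From Stdlib Require Import List Bool.

Set Implicit Arguments.

Inductive form (V : Type) : Type :=
| Var : V -> form V
| Neg : form V -> form V
| And : form V -> form V -> form V
| Box : form V -> form V
| Cond : form V -> form V -> form V.

Arguments Var {V}. Arguments Neg {V}. Arguments And {V}.
Arguments Box {V}. Arguments Cond {V}.

Section Abbrev.
Context {V : Type}.
Definition Or (a b : form V) : form V := Neg (And (Neg a) (Neg b)).
Definition Imp (a b : form V) : form V := Neg (And a (Neg b)).
Definition Iff (a b : form V) : form V := And (Imp a b) (Imp b a).
Definition Dia (a : form V) : form V := Neg (Box (Neg a)).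

Fixpoint nonmodal (f : form V) : Prop :=
  match f with
  | Var _ => True
  | Neg a => nonmodal a
  | And a b => nonmodal a /\ nonmodal b
  | Box _ => False
  | Cond _ _ => False
  end.
End Abbrev.

Inductive pform : Type :=
| PVar : nat -> pform
| PNeg : pform -> pform
| PAnd : pform -> pform -> pform.

Fixpoint peval (v : nat -> bool) (t : pform) : bool :=
  match t with
  | PVar n => v n
  | PNeg a => negb (peval v a)
  | PAnd a b => peval v a && peval v b
  end.

Definition tautology (t : pform) : Prop := forall v, peval v t = true.

Fixpoint psubst {V : Type} (s : nat -> form V) (t : pform) : form V :=
  match t with
  | PVar n => s n
  | PNeg a => Neg (psubst s a)
  | PAnd a b => And (psubst s a) (psubst s b)
  end.

Definition taut_instance {V : Type} (f : form V) : Prop :=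
  exists t s, tautology t /\ f = psubst s t.

(** One-hole contexts, for replacing a single occurrence of a subformula. *)
Inductive ctx (V : Type) : Type :=
| Hole : ctx V
| CNeg : ctx V -> ctx V
| CAndL : ctx V -> form V -> ctx V
| CAndR : form V -> ctx V -> ctx V
| CBox : ctx V -> ctx V
| CCondL : ctx V -> form V -> ctx V
| CCondR : form V -> ctx V -> ctx V.

Arguments Hole {V}.

Fixpoint plug {V : Type} (c : ctx V) (x : form V) : form V :=
  match c with
  | Hole => x
  | CNeg c => Neg (plug c x)
  | CAndL c b => And (plug c x) b
  | CAndR a c => And a (plug c x)
  | CBox c => Box (plug c x)
  | CCondL c b => Cond (plug c x) b
  | CCondR a c => Cond a (plug c x)
  end.

Inductive base_ax {V : Type} : form V -> Prop :=
| ax_taut f : taut_instance f -> base_ax f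
| ax_K a b : base_ax (Imp (Box (Imp a b)) (Imp (Box a) (Box b)))
| ax_4 a : base_ax (Imp (Dia (Dia a)) (Dia a))
| ax_5 a : base_ax (Imp (Dia (Box a)) (Box a)).

Inductive I_ax {V : Type} : form V -> Prop :=
| I1 f p : nonmodal p -> I_ax (Iff (Cond f p) (Box (Imp f p)))
| I2 f a b : I_ax (Iff (Cond f (And a b)) (And (Cond f a) (Cond f b)))
| I3 f a b : I_ax (Imp (Cond f a) (Cond f (Or a b)))
| I4 f a : I_ax (Imp (Cond f a) (Cond f (Box a)))
| I5 f a b : I_ax (Imp (And (Cond f (Or a (Box b))) (Neg (Cond f b))) (Cond f a))
| I6 f a b : I_ax (Imp (And (Cond f (Or a (Dia b))) (Cond f (Neg b))) (Cond f a))
| I7 f b : I_ax (Imp (Neg (Cond f b)) (Cond f (Dia (Neg b)))).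

Inductive A_ax {V : Type} : form V -> Prop :=
| A1 f p : nonmodal p -> A_ax (Iff (Cond f p) (Box (Imp f p)))
| A2 f a b : A_ax (Iff (Cond f (And a b)) (And (Cond f a) (Cond f b)))
| A3 f a b : A_ax (Iff (Cond f (Or a (Box b))) (Or (Cond f a) (Cond f b)))
| A4 f a b : A_ax (Iff (Cond f (Or a (Dia b))) (Or (Cond f a) (Neg (Cond f (Neg b))))).

Inductive thm {V : Type} (Ax : form V -> Prop) : form V -> Prop :=
| t_base f : base_ax f -> thm Ax f
| t_ax f : Ax f -> thm Ax f
| t_mp a b : thm Ax (Imp a b) -> thm Ax a -> thm Ax b
| t_nec a : thm Ax a -> thm Ax (Box a)
| t_re a b c : thm Ax (Iff a b) -> thm Ax (Iff (plug c a) (plug c b)).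

Definition yalcin_thm {V : Type} : form V -> Prop := thm I_ax.
Definition alt_thm {V : Type} : form V -> Prop := thm A_ax.

(* Main.v *)
Require Import Defs.
From Stdlib Require Import List Bool.

Section Gen.
Context {V : Type} {Ax : form V -> Prop}.

Lemma taut_thm (t : pform) (s : nat -> form V) (f : form V) :
  tautology t -> psubst s t = f -> thm Ax f.
Proof. intros Ht <-. apply t_base, ax_taut. exists t, s; auto. Qed.

Lemma pc1 a c : thm Ax a -> thm Ax (Imp a c) -> thm Ax c.
Proof. intros; eapply t_mp; eauto. Qed.
Lemma pc2 a b c : thm Ax a -> thm Ax b -> thm Ax (Imp a (Imp b c)) -> thm Ax c.
Proof. intros; eapply t_mp; [eapply t_mp|]; eauto. Qed.
Lemma pc3 a b d c : thm Ax a -> thm Ax b -> thm Ax d ->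
  thm Ax (Imp a (Imp b (Imp d c))) -> thm Ax c.
Proof. intros; eapply t_mp; [eapply t_mp; [eapply t_mp|]|]; eauto. Qed.
Lemma pc4 a b d e c : thm Ax a -> thm Ax b -> thm Ax d -> thm Ax e ->
  thm Ax (Imp a (Imp b (Imp d (Imp e c)))) -> thm Ax c.
Proof. intros; eapply t_mp; [eapply t_mp; [eapply t_mp; [eapply t_mp|]|]|]; eauto. Qed.
End Gen.
Arguments pc1 {V Ax a c}.
Arguments pc2 {V Ax a b c}.
Arguments pc3 {V Ax a b d c}.
Arguments pc4 {V Ax a b d e c}.

Ltac addatom x l :=
  lazymatch l with
  | context [cons x _] => l
  | _ => constr:(cons x l)
  end.

Ltac atoms F l :=
  lazymatch F with
  | Neg ?a => atoms a l
  | And ?a ?b => let l' := atoms a l in atoms b l'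
  | _ => addatom F l
  end.

Ltac lookup x l :=
  lazymatch l with
  | cons x _ => constr:(0)
  | cons _ ?l' => let n := lookup x l' in constr:(S n)
  end.

Ltac reify F l :=
  lazymatch F with
  | Neg ?a => let r := reify a l in constr:(PNeg r)
  | And ?a ?b => let r1 := reify a l in let r2 := reify b l in constr:(PAnd r1 r2)
  | _ => let n := lookup F l in constr:(PVar n)
  end.

Ltac taut :=
  unfold Iff, Imp, Or, Dia in *;
  lazymatch goal with
  | |- thm _ ?F =>
    let T := type of F in
    let l := atoms F (@nil T) in
    let t := reify F l in
    lazymatch l with
    | cons ?d _ =>
      apply (taut_thm t (fun n => nth n l d));
      [ intros v; simpl;
        repeat (match goal with |- context [v ?n] => destruct (v n) end);
        reflexivity
      | reflexivity ]
    end
  end.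

Section Deriv.
Context {V : Type}.

Lemma iff_intro (Ax : form V -> Prop) a b :
  thm Ax (Imp a b) -> thm Ax (Imp b a) -> thm Ax (Iff a b).
Proof. intros H1 H2. apply (pc2 H1 H2). taut. Qed.

Lemma re_cond (Ax : form V -> Prop) f a b :
  thm Ax (Iff a b) -> thm Ax (Iff (Cond f a) (Cond f b)).
Proof. intro H. exact (t_re (CCondR f Hole) H). Qed.

Lemma I_in_A (g : form V) : I_ax g -> thm A_ax g.
Proof.
  destruct 1.
  - apply t_ax. now constructor.
  - apply t_ax. constructor.
  - assert (H1 : thm A_ax (Iff a (And a (Or a b)))) by taut.
    pose proof (re_cond _ f _ _ H1) as H2.
    pose proof (t_ax _ _ (A2 f a (Or a b))) as H3.
    apply (pc2 H2 H3). taut.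
  - assert (H1 : thm A_ax (Iff (Or (Box a) (Box a)) (Box a))) by taut.
    pose proof (re_cond _ f _ _ H1) as H2.
    pose proof (t_ax _ _ (A3 f (Box a) a)) as H3.
    apply (pc2 H2 H3). taut.
  - pose proof (t_ax _ _ (A3 f a b)) as H3. apply (pc1 H3). taut.
  - pose proof (t_ax _ _ (A4 f a b)) as H3. apply (pc1 H3). taut.
  - assert (H1 : thm A_ax (Iff (Neg (Neg b)) b)) by taut.
    pose proof (re_cond _ f _ _ H1) as H2.
    assert (H4 : thm A_ax (Iff (Or (Dia (Neg b)) (Dia (Neg b))) (Dia (Neg b)))) by taut.
    pose proof (re_cond _ f _ _ H4) as H5.
    pose proof (t_ax _ _ (A4 f (Dia (Neg b)) (Neg b))) as H3.
    apply (pc3 H2 H5 H3). taut.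
Qed.

Lemma A_in_I (g : form V) : A_ax g -> thm I_ax g.
Proof.
  destruct 1.
  - apply t_ax. now constructor.
  - apply t_ax. constructor.
  - pose proof (t_ax _ _ (I5 f a b)) as H5.
    pose proof (t_ax _ _ (I3 f a (Box b))) as H3a.
    pose proof (t_ax _ _ (I4 f b)) as H4.
    pose proof (t_ax _ _ (I3 f (Box b) a)) as H3b.
    assert (H1 : thm I_ax (Iff (Or (Box b) a) (Or a (Box b)))) by taut.
    pose proof (re_cond _ f _ _ H1) as H2.
    apply (pc4 H5 H3a H4 H3b). apply (pc1 H2). taut.
  - pose proof (t_ax _ _ (I6 f a b)) as H6.
    pose proof (t_ax _ _ (I3 f a (Dia b))) as H3a.
    pose proof (t_ax _ _ (I7 f (Neg b))) as H7.
    pose proof (t_ax _ _ (I3 f (Dia b) a)) as H3b.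
    assert (H1 : thm I_ax (Iff (Or (Box b) a) (Or a (Box b)))) by taut.
    assert (H1' : thm I_ax (Iff (Or (Dia b) a) (Or a (Dia b)))) by taut.
    pose proof (re_cond _ f _ _ H1') as H2.
    assert (H8 : thm I_ax (Iff (Neg (Neg (Neg b))) (Neg b))) by taut.
    pose proof (t_re (CCondR f (CNeg (CBox Hole))) H8) as H9. cbn [plug] in H9.
    apply (pc4 H6 H3a H7 H3b). apply (pc2 H2 H9). taut.
Qed.

Lemma thm_mono (A1 A2 : form V -> Prop) :
  (forall g, A1 g -> thm A2 g) -> forall g, thm A1 g -> thm A2 g.
Proof.
  intros H g Hg. induction Hg.
  - now apply t_base.
  - now apply H.
  - eapply t_mp; eauto.
  - now apply t_nec.
  - now apply t_re.
Qed.
End Deriv.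

Theorem lemma4 (V : Type) (phi : form V) : yalcin_thm phi <-> alt_thm phi.
Proof.
  split; apply thm_mono; [apply I_in_A | apply A_in_I].
Qed.
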